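(* Let $\underline s\in\overline{\mathcal S}$. Let $\underline u$ be either an infinite sequence of integers or a finite sequence of integers followed by the symbol $*$, and suppose that $\sigma^k(\underline u)\notin\{\mathbb K^+(\underline s),\mathbb K^-(\underline s)\}$ for all $k\geq 1$. Then there exists an external address $\underline r\in\overline{\mathcal S}$ with $\operatorname{itin}_{\underline s}(\underline r)=\underline u$; if $\underline u$ is periodic, then every such $\underline r$ is periodic. Furthermore, if $\underline t\in\overline{\mathcal S}$ and $k\geq 0$, then no two distinct elements of $\sigma^{-k}(\underline t)$ have the same itinerary with respect to $\underline s$. In particular, no two distinct intermediate external addresses have the same itinerary with respect to $\underline s$.
   Context: External addresses. An infinite external address is a sequence $\underline s=s_1s_2s_3\dots$ of integers. For $n\ge 2$, an intermediate external address of length $n$ is a finite string $s_1s_2\dots s_{n-1}\infty$ with $s_1,\dots,s_{n-2}\in\mathbb Z$ and $s_{n-1}\in\mathbb Z+\tfrac12$; the single symbol $\infty$ is the intermediate external address of length $1$. Let $\overline{\mathcal S}$ be the set of all infinite and intermediate external addresses and $\dot{\mathcal S}=\overline{\mathcal S}\setminus\{\infty\}$. $\dot{\mathcal S}$ is totally ordered lexicographically (entries compared as real numbers). $\overline{\mathcal S}$ carries the circular order obtained by adding $\infty$ as a single point lying above and below all of $\dot{\mathcal S}$. The shift $\sigma:\dot{\mathcal S}\to\overline{\mathcal S}$ deletes the first entry (so $\sigma(s_1\infty)=\infty$). For a number $j$ and an address $\underline t$, $j\underline t$ denotes the address with first entry $j$ followed by the entries of $\underline t$. A sequence is periodic if it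 is fixed by some iterate $\sigma^n$, $n\ge1$. Itineraries. For $\underline s\in\dot{\mathcal S}$ and $\underline r\in\overline{\mathcal S}$, $\operatorname{itin}_{\underline s}(\underline r)=u_1u_2\dots$ is defined by: $u_k=j\in\mathbb Z$ if $j\underline s<\sigma^{k-1}(\underline r)<(j+1)\underline s$; $u_k$ is the boundary symbol $\binom{j}{j-1}$ if $\sigma^{k-1}(\underline r)=j\underline s$ ($j\in\mathbb Z$); $u_k=*$ if $\sigma^{k-1}(\underline r)=\infty$, in which case the itinerary terminates with this entry. For $\underline s=\infty$ the same definition is used with $j\underline s,(j+1)\underline s$ replaced by $(j-\frac12)\infty,(j+\frac12)\infty$. The sequences $\operatorname{itin}^+_{\underline s}(\underline r)$, $\operatorname{itin}^-_{\underline s}(\underline r)$ are obtained by replacing every boundary symbol $\binom{j}{j-1}$ by $j$, respectively by $j-1$. The kneading sequence of $\underline s$ is $\mathbb K(\underline s)=\operatorname{itin}_{\underline s}(\underline s)$, and $\mathbb K^{\pm}(\underline s)=\operatorname{itin}^{\pm}_{\underline s}(\underline s)$. On symbol sequences, $\sigma$ also denotes the shift deleting the first entry. *)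

(* Defs.v *)
From Stdlib Require Import ZArith List.
Import ListNotations.
Open Scope Z_scope.

(** External addresses (the set \overline{S}).
    - [AInf f]   : the infinite address f 0, f 1, f 2, ...  (so s_{k+1} = f k)
    - [AInt l h] : the intermediate address  l_1 ... l_m (h+1/2) ∞
                   of length m+2 (all l_i integers, last finite entry h + 1/2)
    - [AInfty]   : the intermediate address ∞ of length 1. *)
Inductive addr : Type :=
| AInf (f : nat -> Z)
| AInt (l : list Z) (h : Z)
| AInfty.

(** The i-th finite entry (0-indexed), doubled so that it is an integer:
    integer j ↦ 2j, half-integer h+1/2 ↦ 2h+1; [None] for the symbol ∞. *)
Definition entry (a : addr) (i : nat) : option Z :=
  match a with
  | AInf f => Some (2 * f i)
  | AInt l h =>
      if (i <? length l)%nat then Some (2 * nth i l 0)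
      else if (i =? length l)%nat then Some (2 * h + 1) else None
  | AInfty => None
  end.

(** Lexicographic (strict) order on \dot S, entries compared as reals.
    (Two distinct elements of \dot S always first differ at a finite entry.) *)
Definition addr_lt (a b : addr) : Prop :=
  exists k, (forall i, (i < k)%nat -> entry a i = entry b i) /\
    exists x y, entry a k = Some x /\ entry b k = Some y /\ x < y.

(** The shift σ (deletes the first entry; σ(s_1 ∞) = ∞).  σ(∞) is undefined
    in the paper; here it is set to ∞ but it is only ever used on \dot S. *)
Definition shift (a : addr) : addr :=
  match a with
  | AInf f => AInf (fun n => f (S n))
  | AInt [] _ => AInfty
  | AInt (_ :: l) h => AInt l h
  | AInfty => AInfty
  end.

(** j t : prepend the integer j (only used for t in \dot S). *)
Definition acons (j : Z) (a : addr) : addr :=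
  match a with
  | AInf f => AInf (fun n => match n with O => j | S m => f m end)
  | AInt l h => AInt (j :: l) h
  | AInfty => AInfty
  end.

(** Boundary points of the itinerary partition w.r.t. s:
    j s for s in \dot S, and (j - 1/2)∞ for s = ∞. *)
Definition bnd (s : addr) (j : Z) : addr :=
  match s with
  | AInfty => AInt [] (j - 1)
  | _ => acons j s
  end.

(** Itinerary symbols: an integer j, or the boundary symbol (j over j-1). *)
Inductive isym : Type :=
| ISym (j : Z)
| IBnd (j : Z).

Definition sym_at (s x : addr) (e : isym) : Prop :=
  x <> AInfty /\
  match e with
  | ISym j => addr_lt (bnd s j) x /\ addr_lt x (bnd s (j + 1))
  | IBnd j => x = bnd s j
  end.

Inductive sseq (A : Type) : Type :=
| SInf (f : nat -> A)
| SFin (l : list A).   (* l_1 ... l_m * *)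
Arguments SInf {A} f.
Arguments SFin {A} l.

Definition smap {A B : Type} (g : A -> B) (u : sseq A) : sseq B :=
  match u with
  | SInf f => SInf (fun n => g (f n))
  | SFin l => SFin (map g l)
  end.

(** σ^k on symbol sequences; [None] when σ^k is undefined
    (k larger than the number of entries minus one). *)
Definition sshiftn {A : Type} (k : nat) (u : sseq A) : option (sseq A) :=
  match u with
  | SInf f => Some (SInf (fun n => f (n + k)%nat))
  | SFin l => if (k <=? length l)%nat then Some (SFin (skipn k l)) else None
  end.

Definition speriodic {A : Type} (u : sseq A) : Prop :=
  exists n, (1 <= n)%nat /\ sshiftn n u = Some u.

Definition Itin (s r : addr) (v : sseq isym) : Prop :=
  match v with
  | SInf f => forall k, sym_at s (Nat.iter k shift r) (f k)
  | SFin l =>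
      (forall k, (k < length l)%nat ->
         sym_at s (Nat.iter k shift r) (nth k l (ISym 0))) /\
      Nat.iter (length l) shift r = AInfty
  end.

Definition splus (e : isym) : Z := match e with ISym j => j | IBnd j => j end.
Definition sminus (e : isym) : Z := match e with ISym j => j | IBnd j => j - 1 end.

Definition aperiodic (r : addr) : Prop :=
  r <> AInfty /\ exists n, (1 <= n)%nat /\ Nat.iter n shift r = r.

Definition in_preimage (k : nat) (t r : addr) : Prop :=
  (forall j, (j < k)%nat -> Nat.iter j shift r <> AInfty) /\
  Nat.iter k shift r = t.

Definition is_intermediate (r : addr) : Prop :=
  match r with AInf _ => False | _ => True end.

(* Main.v *)
Require Import Defs.
From Stdlib Require Import ZArith List Lia FunctionalExtensionality ClassicalEpsilon.
Require Import Defs.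
Import ListNotations.
Open Scope Z_scope.
Lemma Sinj {A} (x y : A) : Some x = Some y -> x = y. Proof. congruence. Qed.

Lemma entry_shift a i : entry (shift a) i = entry a (S i).
Proof.
  destruct a as [f|l h|]; simpl; auto.
  destruct l; simpl; auto.
Qed.

Lemma entry_iter n a i : entry (Nat.iter n shift a) i = entry a (i + n)%nat.
Proof.
  revert i. induction n; intro i; simpl.
  - now rewrite Nat.add_0_r.
  - rewrite entry_shift, IHn. f_equal. lia.
Qed.

Lemma entry_AInt_lt l h i : (i < length l)%nat -> entry (AInt l h) i = Some (2 * nth i l 0).
Proof. intro H. simpl. apply Nat.ltb_lt in H. now rewrite H. Qed.
Lemma entry_AInt_eq l h : entry (AInt l h) (length l) = Some (2 * h + 1).
Proof. simpl. rewrite Nat.ltb_irrefl, Nat.eqb_refl. auto. Qed.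
Lemma entry_AInt_gt l h i : (length l < i)%nat -> entry (AInt l h) i = None.
Proof.
  intro H. simpl. destruct (Nat.ltb_spec i (length l)); [lia|].
  destruct (Nat.eqb_spec i (length l)); [lia|auto].
Qed.

Lemma odd_last b t0 h i : entry b t0 = Some (2*h+1) -> (t0 < i)%nat -> entry b i = None.
Proof.
  intros E Hi. destruct b as [f|l h'|]; cbn [entry] in E.
  - apply Sinj in E; lia.
  - destruct (Nat.ltb_spec t0 (length l)).
    + apply Sinj in E; lia.
    + destruct (Nat.eqb_spec t0 (length l)); [|discriminate].
      apply entry_AInt_gt. lia.
  - discriminate.
Qed.

Lemma none_has_odd a t : a <> AInfty -> entry a t = None ->
  exists t0 h, (t0 < t)%nat /\ entry a t0 = Some (2*h+1).
Proof.
  intros Ha E. destruct a as [f|l h|]; [discriminate| |easy].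
  exists (length l), h. split; [|apply entry_AInt_eq].
  destruct (Nat.lt_total t (length l)) as [H|[H|H]].
  - rewrite entry_AInt_lt in E; auto; discriminate.
  - subst. rewrite entry_AInt_eq in E. discriminate.
  - auto.
Qed.

Lemma entry_ext a b : a <> AInfty -> b <> AInfty -> (forall i, entry a i = entry b i) -> a = b.
Proof.
  intros Ha Hb E.
  destruct a as [f|l h|]; destruct b as [g|l' h'|]; try easy.
  - f_equal. apply functional_extensionality. intro i. specialize (E i). cbn [entry] in E.
    apply Sinj in E. lia.
  - specialize (E (length l')). rewrite entry_AInt_eq in E. cbn [entry] in E. apply Sinj in E; lia.
  - specialize (E (length l)). rewrite entry_AInt_eq in E. cbn [entry] in E. apply Sinj in E; lia.
  - assert (Hlen : length l = length l').
    { destruct (Nat.lt_total (length l) (length l')) as [H|[H|H]]; auto.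
      - specialize (E (length l)). rewrite entry_AInt_eq, entry_AInt_lt in E; auto. apply Sinj in E; lia.
      - specialize (E (length l')). rewrite entry_AInt_eq, entry_AInt_lt in E; auto. apply Sinj in E; lia. }
    assert (h = h').
    { specialize (E (length l)). rewrite entry_AInt_eq, Hlen, entry_AInt_eq in E. apply Sinj in E; lia. }
    subst h'. f_equal. apply nth_ext with 0 0; auto.
    intros n Hn. specialize (E n). rewrite !entry_AInt_lt in E; try lia. apply Sinj in E; lia.
Qed.

Lemma lt_irrefl a : ~ addr_lt a a.
Proof. intros [k [_ [x [y [E1 [E2 L]]]]]]. rewrite E1 in E2. apply Sinj in E2; lia. Qed.

Lemma lt_trans a b c : addr_lt a b -> addr_lt b c -> addr_lt a c.
Proof.
  intros [k1 [A1 [x1 [y1 [E1 [F1 L1]]]]]] [k2 [A2 [x2 [y2 [E2 [F2 L2]]]]]].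
  destruct (Nat.lt_total k1 k2) as [H|[H|H]].
  - exists k1. split. { intros i Hi. rewrite A1, A2; auto; lia. }
    exists x1, y1. split; auto. split; auto. rewrite <- A2; auto.
  - subst. exists k2. split. { intros i Hi. rewrite A1, A2; auto. }
    rewrite F1 in E2. apply Sinj in E2. subst. exists x1, y2. repeat split; auto; lia.
  - exists k2. split. { intros i Hi. rewrite A1, A2; auto; lia. }
    exists x2, y2. repeat split; auto. rewrite A1; auto.
Qed.

Lemma lt_asym a b : addr_lt a b -> addr_lt b a -> False.
Proof. intros H1 H2. exact (lt_irrefl _ (lt_trans _ _ _ H1 H2)). Qed.

Lemma lt_not_none a b : addr_lt a b -> a <> AInfty /\ b <> AInfty.
Proof. intros [k [_ [x [y [E1 [E2 _]]]]]]. split; intro; subst; discriminate. Qed.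

Lemma lt_first a b x y : entry a 0 = Some x -> entry b 0 = Some y -> x < y -> addr_lt a b.
Proof. intros. exists 0%nat. split; [intros; lia|]. eauto 6. Qed.

Lemma lt_first_le a b x y : addr_lt a b -> entry a 0 = Some x -> entry b 0 = Some y -> x <= y.
Proof.
  intros [k [A [x' [y' [E1 [E2 L]]]]]] Ea Eb. destruct k.
  - rewrite Ea in E1; rewrite Eb in E2. apply Sinj in E1; apply Sinj in E2; lia.
  - specialize (A 0%nat ltac:(lia)). rewrite Ea, Eb in A. apply Sinj in A; lia.
Qed.

Lemma lt_shift a b : addr_lt a b -> entry a 0 = entry b 0 -> addr_lt (shift a) (shift b).
Proof.
  intros [k [A [x [y [E1 [E2 L]]]]]] E0. destruct k.
  - rewrite E1, E2 in E0. apply Sinj in E0; lia.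
  - exists k. split. { intros i Hi. rewrite !entry_shift. apply A. lia. }
    exists x, y. rewrite !entry_shift. auto.
Qed.

Lemma lt_unshift a b : addr_lt (shift a) (shift b) -> entry a 0 = entry b 0 -> addr_lt a b.
Proof.
  intros [k [A [x [y [E1 [E2 L]]]]]] E0. exists (S k). split.
  - intros [|i] Hi; auto. rewrite <- !entry_shift. apply A. lia.
  - exists x, y. rewrite <- !entry_shift. auto.
Qed.

Definition agree (K : nat) (a b : addr) := forall i, (i < K)%nat -> entry a i = entry b i.

Lemma agree_iter K n a b : agree K a b -> agree (K - n) (Nat.iter n shift a) (Nat.iter n shift b).
Proof. intros H i Hi. rewrite !entry_iter. apply H. lia. Qed.

Lemma agree_le K K' a b : agree K a b -> (K' <= K)%nat -> agree K' a b.
Proof. intros H L i Hi. apply H. lia. Qed.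

Lemma agree_sym K a b : agree K a b -> agree K b a.
Proof. intros H i Hi. symmetry. auto. Qed.

Lemma stable_lt_l a e : addr_lt a e -> exists B, forall c, agree B c a -> addr_lt c e.
Proof.
  intros [k [A [x [y [E1 [E2 L]]]]]]. exists (S k). intros c H.
  exists k. split. { intros i Hi. rewrite H by lia. auto. }
  exists x, y. rewrite H by lia. auto.
Qed.

Lemma stable_lt_r a e : addr_lt e a -> exists B, forall c, agree B c a -> addr_lt e c.
Proof.
  intros [k [A [x [y [E1 [E2 L]]]]]]. exists (S k). intros c H.
  exists k. split. { intros i Hi. rewrite H by lia. auto. }
  exists x, y. rewrite H by lia. auto.
Qed.

Lemma convex a b c K : addr_lt a c -> addr_lt c b -> agree K a b -> agree K a c.
Proof.
  intros [k1 [A1 [x1 [y1 [E1 [F1 L1]]]]]] [k2 [A2 [x2 [y2 [E2 [F2 L2]]]]]] H.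
  intros i Hi. destruct (Nat.lt_ge_cases i k1) as [Hk|Hk]; [auto|].
  exfalso. assert (k1 < K)%nat by lia.
  destruct (Nat.lt_total k2 k1) as [G|[G|G]].
  - assert (Q : entry c k2 = entry b k2) by (rewrite <- (A1 k2 G); apply H; lia).
    rewrite Q, F2 in E2. apply Sinj in E2; lia.
  - rewrite G in *. assert (Q : entry a k1 = entry b k1) by (apply H; lia).
    rewrite E1, F2 in Q. rewrite F1 in E2. apply Sinj in Q; apply Sinj in E2; lia.
  - rewrite A2 in F1 by lia. rewrite <- H in F1 by lia. rewrite E1 in F1. apply Sinj in F1; lia.
Qed.

Lemma least (P : nat -> Prop) : (exists n, P n) -> exists n, P n /\ forall m, (m < n)%nat -> ~ P m.
Proof.
  intros [n Hn]. induction n as [n IH] using (well_founded_induction lt_wf).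
  destruct (classic (exists m, (m < n)%nat /\ P m)) as [[m [Hm Pm]]|N].
  - exact (IH m Hm Pm).
  - exists n. split; auto. intros m Hm Pm. apply N. eauto.
Qed.

Lemma trich a b : a <> AInfty -> b <> AInfty -> a = b \/ addr_lt a b \/ addr_lt b a.
Proof.
  intros Ha Hb. destruct (classic (forall i, entry a i = entry b i)) as [E|N].
  - left. now apply entry_ext.
  - right. apply not_all_ex_not in N.
    destruct (least _ N) as [t [Dt Mt]].
    assert (Ag : forall i, (i < t)%nat -> entry a i = entry b i).
    { intros i Hi. apply NNPP. auto. }
    destruct (entry a t) as [x|] eqn:Ea; destruct (entry b t) as [y|] eqn:Eb.
    + destruct (Z.lt_total x y) as [L|[L|L]].
      * left. exists t. eauto 7.
      * subst; congruence.
      * right. exists t. split; [intros; symmetry; auto|]. eauto 7.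
    + exfalso. destruct (none_has_odd b t Hb Eb) as [t0 [h [Ht0 Eo]]].
      rewrite <- Ag in Eo by auto. rewrite (odd_last a t0 h t Eo Ht0) in Ea. discriminate.
    + exfalso. destruct (none_has_odd a t Ha Ea) as [t0 [h [Ht0 Eo]]].
      rewrite Ag in Eo by auto. rewrite (odd_last b t0 h t Eo Ht0) in Eb. discriminate.
    + congruence.
Qed.

Lemma entry_AInf f i : entry (AInf f) i = Some (2 * f i).
Proof. reflexivity. Qed.

Lemma acons_0 j s : s <> AInfty -> entry (acons j s) 0 = Some (2 * j).
Proof. destruct s; easy. Qed.
Lemma acons_S j s i : s <> AInfty -> entry (acons j s) (S i) = entry s i.
Proof. destruct s as [f|l h|]; intros; [reflexivity| |easy]. rewrite <- entry_shift. reflexivity. Qed.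
Lemma shift_acons j s : shift (acons j s) = s.
Proof. destruct s; reflexivity. Qed.
Lemma acons_ne j s : s <> AInfty -> acons j s <> AInfty.
Proof. destruct s; easy. Qed.
Lemma bnd_acons s j : s <> AInfty -> bnd s j = acons j s.
Proof. destruct s; easy. Qed.

Lemma acons_lt j j' s s' : s <> AInfty -> s' <> AInfty -> j < j' -> addr_lt (acons j s) (acons j' s').
Proof. intros. apply lt_first with (2*j) (2*j'); try apply acons_0; auto; lia. Qed.

Lemma acons_lt_tail j s s' : s <> AInfty -> s' <> AInfty -> addr_lt s s' -> addr_lt (acons j s) (acons j s').
Proof.
  intros. apply lt_unshift; rewrite ?shift_acons; auto. rewrite !acons_0; auto.
Qed.

Lemma acons_le j j' s : s <> AInfty -> j <= j' -> acons j s = acons j' s \/ addr_lt (acons j s) (acons j' s).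
Proof. intros. destruct (Z.eq_dec j j'); [left; subst; auto|right; apply acons_lt; auto; lia]. Qed.

Lemma iter_AInf n f : Nat.iter n shift (AInf f) = AInf (fun i => f (i + n)%nat).
Proof.
  induction n; simpl.
  - f_equal. apply functional_extensionality. intro i. f_equal. lia.
  - rewrite IHn. simpl. f_equal. apply functional_extensionality. intro i. f_equal. lia.
Qed.

Lemma iter_AInfty n : Nat.iter n shift AInfty = AInfty.
Proof. induction n; simpl; auto. rewrite IHn; auto. Qed.

Lemma iter_AInt l h : Nat.iter (S (length l)) shift (AInt l h) = AInfty.
Proof.
  induction l; [reflexivity|]. simpl length. rewrite Nat.iter_succ_r. simpl shift. auto.
Qed.

Lemma sym_first s x j y : s <> AInfty -> sym_at s x (ISym j) -> entry x 0 = Some y -> 2*j <= y <= 2*j+2.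
Proof.
  intros Hs [Hx [L U]] E. rewrite bnd_acons in L, U by auto. split.
  - exact (lt_first_le _ _ _ _ L (acons_0 _ _ Hs) E).
  - replace (2*j+2) with (2*(j+1)) by lia. exact (lt_first_le _ _ _ _ U E (acons_0 _ _ Hs)).
Qed.

Lemma phi_ok s y j : s <> AInfty -> y <> s ->
  exists x, shift x = y /\ sym_at s x (ISym j) /\ (forall f, y = AInf f -> exists g, x = AInf g).
Proof.
  intros Hs Hys. destruct (classic (y = AInfty)) as [Hy|Hy].
  - subst. exists (AInt [] j). split; [reflexivity|]. split; [|intros; discriminate].
    split; [easy|]. rewrite !bnd_acons by auto. split.
    + apply lt_first with (2*j) (2*j+1); try apply acons_0; auto; try reflexivity. lia.
    + apply lt_first with (2*j+1) (2*(j+1)); try apply acons_0; auto; try reflexivity. lia.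
  - destruct (trich y s Hy Hs) as [E|[L|L]]; [contradiction| |].
    + exists (acons (j+1) y). split; [apply shift_acons|]. split.
      * split; [apply acons_ne; auto|]. rewrite !bnd_acons by auto. split.
        -- apply acons_lt; auto; lia.
        -- apply acons_lt_tail; auto.
      * intros f ->. eexists; reflexivity.
    + exists (acons j y). split; [apply shift_acons|]. split.
      * split; [apply acons_ne; auto|]. rewrite !bnd_acons by auto. split.
        -- apply acons_lt_tail; auto.
        -- apply acons_lt; auto; lia.
      * intros f ->. eexists; reflexivity.
Qed.

Lemma sym_exists s g : s <> AInfty -> exists e, sym_at s (AInf g) e.
Proof.
  intros Hs. set (a := g 0%nat).
  assert (Hsh : shift (AInf g) <> AInfty) by easy.
  assert (E0 : entry (AInf g) 0 = Some (2*a)) by reflexivity.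
  destruct (trich _ _ Hsh Hs) as [E|[L|L]].
  - exists (IBnd a). split; [easy|]. rewrite bnd_acons by auto.
    apply entry_ext; try easy; [apply acons_ne; auto|].
    intros [|i]. { rewrite acons_0; auto. } rewrite acons_S, <- E, entry_shift; auto.
  - exists (ISym (a-1)). split; [easy|]. rewrite !bnd_acons by auto. split.
    + apply lt_first with (2*(a-1)) (2*a); auto. apply acons_0; auto. lia.
    + replace (a-1+1) with a by lia. apply lt_unshift; rewrite ?shift_acons; auto.
      rewrite acons_0; auto.
  - exists (ISym a). split; [easy|]. rewrite !bnd_acons by auto. split.
    + apply lt_unshift; rewrite ?shift_acons; auto. rewrite acons_0; auto.
    + apply lt_first with (2*a) (2*(a+1)); auto. apply acons_0; auto. lia.
Qed.

Lemma first_entry_some x : x <> AInfty -> exists y, entry x 0 = Some y.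
Proof. destruct x as [f|[|a l] h|]; intros; try easy; eexists; reflexivity. Qed.

Lemma same_shift_first x x' : x <> AInfty -> x' <> AInfty -> shift x = shift x' ->
  entry x 0 = entry x' 0 -> x = x'.
Proof.
  intros H H' E E0. apply entry_ext; auto. intros [|i]; auto.
  rewrite <- !entry_shift, E. auto.
Qed.

Lemma first_even x : shift x <> AInfty -> exists a, entry x 0 = Some (2*a).
Proof. destruct x as [f|[|a l] h|]; intros; try easy; eexists; reflexivity. Qed.

Lemma shift_none x : x <> AInfty -> shift x = AInfty -> exists h, x = AInt [] h.
Proof. destruct x as [f|[|a l] h|]; intros; try easy; eexists; reflexivity. Qed.

Lemma e0 h : entry (AInt [] h) 0 = Some (2*h+1). Proof. reflexivity. Qed.
Lemma e1 h k : entry (AInt [] h) (S k) = None. Proof. reflexivity. Qed.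

Lemma same_shift_sym s x x' e : shift x = shift x' -> sym_at s x e -> sym_at s x' e -> x = x'.
Proof.
  intros E [Hx Sx] [Hx' Sx']. destruct e as [j|j]; [|congruence].
  destruct Sx as [L U]; destruct Sx' as [L' U'].
  apply same_shift_first; auto.
  destruct (classic (s = AInfty)) as [Hs|Hs].
  - subst s. simpl bnd in *.
    destruct (first_entry_some x Hx) as [y Ey]. destruct (first_entry_some x' Hx') as [y' Ey'].
    assert (F : forall z w, entry z 0 = Some w -> addr_lt (AInt [] (j-1)) z -> addr_lt z (AInt [] (j+1-1)) -> w = 2*j).
    { intros z w Ez Lz Uz.
      pose proof (lt_first_le _ _ _ _ Lz (e0 _) Ez).
      pose proof (lt_first_le _ _ _ _ Uz Ez (e0 _)).
      assert (w <> 2*(j-1)+1).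
      { intro Q. subst w. destruct Lz as [k [Ak [p [q [P1 [P2 P3]]]]]]. destruct k.
        - rewrite Ez in P2. rewrite e0 in P1. apply Sinj in P1; apply Sinj in P2. lia.
        - rewrite e1 in P1. discriminate. }
      assert (w <> 2*(j+1-1)+1).
      { intro Q. subst w. destruct Uz as [k [Ak [p [q [P1 [P2 P3]]]]]]. destruct k.
        - rewrite Ez in P1. rewrite e0 in P2. apply Sinj in P1; apply Sinj in P2. lia.
        - rewrite e1 in P2. discriminate. }
      lia. }
    rewrite Ey, Ey'. f_equal. rewrite (F x y Ey L U), (F x' y' Ey' L' U'). auto.
  - assert (SX : sym_at s x (ISym j)) by (split; auto).
    assert (SX' : sym_at s x' (ISym j)) by (split; auto).
    rewrite !bnd_acons in * by auto.
    destruct (classic (shift x = AInfty)) as [N|N].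
    + destruct (shift_none x Hx N) as [h ->]. assert (N' : shift x' = AInfty) by (rewrite <- E; auto).
      destruct (shift_none x' Hx' N') as [h' ->].
      pose proof (sym_first s _ j _ Hs SX (e0 _)).
      pose proof (sym_first s _ j _ Hs SX' (e0 _)).
      rewrite !e0. f_equal. lia.
    + assert (N' : shift x' <> AInfty) by (rewrite <- E; auto).
      destruct (first_even x N) as [a Ea]. destruct (first_even x' N') as [a' Ea'].
      pose proof (sym_first s _ j _ Hs SX Ea).
      pose proof (sym_first s _ j _ Hs SX' Ea').
      rewrite Ea, Ea'. f_equal.
      assert (side : forall z b, entry z 0 = Some (2*b) -> addr_lt (acons j s) z -> addr_lt z (acons (j+1) s) ->
                 (b = j /\ addr_lt s (shift z)) \/ (b = j+1 /\ addr_lt (shift z) s)).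
      { intros z b Ez Lz Uz.
        pose proof (lt_first_le _ _ _ _ Lz (acons_0 _ _ Hs) Ez).
        pose proof (lt_first_le _ _ _ _ Uz Ez (acons_0 _ _ Hs)).
        assert (b = j \/ b = j + 1) as [->| ->] by lia.
        - left. split; auto. rewrite <- (shift_acons j s). apply lt_shift; auto.
          rewrite acons_0; auto.
        - right. split; auto. rewrite <- (shift_acons (j+1) s). apply lt_shift; auto.
          rewrite acons_0; auto. }
      destruct (side x a Ea L U) as [[-> Q]|[-> Q]];
      destruct (side x' a' Ea' L' U') as [[-> Q']|[-> Q']]; auto;
      rewrite E in Q; exfalso; eapply lt_asym; eauto.
Qed.

Lemma itin_sym s r v j : Itin s r v -> Nat.iter j shift r <> AInfty ->
  exists e, sym_at s (Nat.iter j shift r) e /\ (forall r', Itin s r' v -> Nat.iter j shift r' <> AInfty -> sym_at s (Nat.iter j shift r') e).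
Proof.
  intros H N. destruct v as [f|l].
  - exists (f j). split; [apply H|]. intros r' H' _. apply H'.
  - destruct H as [H1 H2]. destruct (Nat.lt_ge_cases j (length l)) as [Lt|Ge].
    + exists (nth j l (ISym 0)). split; [auto|]. intros r' [H1' _] _. auto.
    + exfalso. apply N. replace j with (j - length l + length l)%nat by lia.
      rewrite Nat.iter_add, H2. apply iter_AInfty.
Qed.

Lemma part2 s : forall (t : addr) (k : nat) (r r' : addr),
     in_preimage k t r -> in_preimage k t r' ->
     forall v : sseq isym, Itin s r v -> Itin s r' v -> r = r'.
Proof.
  intros t k r r' [P1 P2] [P1' P2'] v I I'.
  assert (forall d, (d <= k)%nat -> Nat.iter (k - d) shift r = Nat.iter (k - d) shift r').
  { induction d; intro Hd.
    - rewrite Nat.sub_0_r, P2, P2'. auto.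
    - set (j := (k - S d)%nat). assert (Hj : (k - d = S j)%nat) by lia.
      specialize (IHd ltac:(lia)). rewrite Hj in IHd. simpl in IHd.
      destruct (itin_sym s r v j I (P1 j ltac:(lia))) as [e [S1 S2]].
      apply (same_shift_sym s _ _ e IHd S1). apply S2; auto. apply P1'; lia. }
  specialize (H k (le_n _)). rewrite Nat.sub_diag in H. exact H.
Qed.

Lemma part3 s : forall r r' : addr, is_intermediate r -> is_intermediate r' ->
     forall v : sseq isym, Itin s r v -> Itin s r' v -> r = r'.
Proof.
  intros r r' Ir Ir' v I I'. destruct v as [f|l].
  - exfalso. destruct r as [g|l h|]; [easy| |].
    + destruct (I (S (length l))) as [N _]. apply N. apply iter_AInt.
    + destruct (I 0%nat) as [N _]. apply N. reflexivity.
  - refine (part2 s AInfty (length l) r r' _ _ (SFin l) I I').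
    + split; [|apply I]. intros j Hj. destruct I as [I1 _]. apply (I1 j Hj).
    + split; [|apply I']. intros j Hj. destruct I' as [I1 _]. apply (I1 j Hj).
Qed.

Lemma fin_exists s (Hs : s <> AInfty) : forall l,
  (forall k, (1 <= k <= length l)%nat -> ~ Itin s s (SFin (map ISym (skipn k l)))) ->
  exists r, Itin s r (SFin (map ISym l)).
Proof.
  induction l as [|a l IH]; intro H.
  - exists AInfty. split; [simpl; intros; lia|reflexivity].
  - destruct IH as [y Iy].
    { intros k Hk. apply (H (S k)). simpl. lia. }
    assert (Hys : y <> s). { intro E. subst y. apply (H 1%nat); [simpl; lia|]. exact Iy. }
    destruct (phi_ok s y a Hs Hys) as [x [Sx [Symx _]]].
    exists x. destruct Iy as [I1 I2]. split.
    + intros [|k] Hk; [exact Symx|]. rewrite Nat.iter_succ_r, Sx. apply I1. simpl in Hk. lia.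
    + simpl length. rewrite Nat.iter_succ_r, Sx. exact I2.
Qed.

Lemma shift_int a : is_intermediate a -> is_intermediate (shift a).
Proof. destruct a as [f|[|x l] h|]; simpl; auto. Qed.
Lemma iter_int n a : is_intermediate a -> is_intermediate (Nat.iter n shift a).
Proof. induction n; simpl; auto. intro. apply shift_int. auto. Qed.

Lemma bound_ex N (g : nat -> Z) : exists c, forall j, (j < N)%nat -> g j < c.
Proof.
  induction N. { exists 0. intros; lia. }
  destruct IHN as [c Hc]. exists (Z.max c (g N + 1)). intros j Hj.
  destruct (Nat.eq_dec j N); [subst; lia|]. specialize (Hc j ltac:(lia)). lia.
Qed.

Lemma zchoice s N : exists g, forall j, (j < N)%nat -> Nat.iter j shift s <> AInf g.
Proof.
  destruct s as [g0|l h|].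
  - destruct (bound_ex N g0) as [c Hc]. exists (fun _ => c). intros j Hj E.
    assert (Q := f_equal (fun a => entry a 0) E). cbv beta in Q. rewrite entry_iter, !entry_AInf in Q.
    apply Sinj in Q. simpl Nat.add in Q. specialize (Hc j Hj). lia.
  - exists (fun _ => 0). intros j _ E. pose proof (iter_int j (AInt l h) I) as Q. rewrite E in Q. exact Q.
  - exists (fun _ => 0). intros j _ E. pose proof (iter_int j AInfty I) as Q. rewrite E in Q. exact Q.
Qed.

Lemma approx s (Hs : s <> AInfty) : forall N (u : nat -> Z) g,
  (forall j, (j < N)%nat -> Nat.iter j shift s <> AInf g) ->
  exists f, Nat.iter N shift (AInf f) = AInf g /\
    (forall i, (i < N)%nat -> sym_at s (Nat.iter i shift (AInf f)) (ISym (u i))) /\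
    (forall i, (1 <= i <= N)%nat -> Nat.iter i shift (AInf f) <> s).
Proof.
  induction N as [|N IH]; intros u g Hz.
  - exists g. split; [reflexivity|]. split; intros; lia.
  - destruct (IH (fun i => u (S i)) g) as [f' [P1 [P2 P3]]].
    { intros j Hj. apply Hz. lia. }
    assert (Hys : AInf f' <> s).
    { intro E. apply (Hz N ltac:(lia)). rewrite <- E. exact P1. }
    destruct (phi_ok s (AInf f') (u 0%nat) Hs Hys) as [x [Sx [Symx Hx]]].
    destruct (Hx f' eq_refl) as [gg ->].
    exists gg. split; [|split].
    + rewrite Nat.iter_succ_r, Sx. exact P1.
    + intros [|i] Hi; [exact Symx|]. rewrite Nat.iter_succ_r, Sx. apply P2. lia.
    + intros [|i] Hi; [lia|]. rewrite Nat.iter_succ_r, Sx. destruct i; [exact Hys|]. apply P3. lia.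
Qed.

Definition Gd (F : nat -> nat -> Z) (l : list Z) :=
  forall M, exists N, (M <= N)%nat /\ forall i, (i < length l)%nat -> F N i = nth i l 0.

Fixpoint pre (F : nat -> nat -> Z) (u : nat -> Z) (k : nat) : list Z :=
  match k with
  | O => []
  | S k => let l := pre F u k in
      if excluded_middle_informative (Gd F (l ++ [u (length l)])) then l ++ [u (length l)]
      else l ++ [u (length l) + 1]
  end.

Lemma pre_len F u k : length (pre F u k) = k.
Proof.
  induction k; simpl; auto. destruct excluded_middle_informative; rewrite length_app; simpl; lia.
Qed.

Lemma nth_app_last (l : list Z) a i : nth i (l ++ [a]) 0 = if (i <? length l)%nat then nth i l 0 else if (i =? length l)%nat then a else 0.
Proof.
  destruct (Nat.ltb_spec i (length l)). { apply app_nth1; auto. }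
  rewrite app_nth2 by auto. destruct (Nat.eqb_spec i (length l)).
  - subst. rewrite Nat.sub_diag. reflexivity.
  - destruct (i - length l)%nat eqn:E; [lia|]. destruct n0; reflexivity.
Qed.

Lemma Gd_step F u l : (forall N i, (i < N)%nat -> F N i = u i \/ F N i = u i + 1) ->
  Gd F l -> Gd F (l ++ [u (length l)]) \/ Gd F (l ++ [u (length l) + 1]).
Proof.
  intros Hb G. apply NNPP. intro Nn. apply not_or_and in Nn. destruct Nn as [N1 N2].
  unfold Gd in N1, N2. apply not_all_ex_not in N1. apply not_all_ex_not in N2.
  destruct N1 as [M1 N1]. destruct N2 as [M2 N2].
  destruct (G (Nat.max M1 (Nat.max M2 (S (length l))))) as [N [HN HA]].
  assert (Fa : forall a, F N (length l) = a -> forall i, (i < length (l ++ [a]))%nat -> F N i = nth i (l ++ [a]) 0).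
  { intros a Ea i Hi. rewrite length_app in Hi. simpl in Hi. rewrite nth_app_last.
    destruct (Nat.ltb_spec i (length l)); [auto|]. replace i with (length l) by lia. rewrite Nat.eqb_refl. auto. }
  destruct (Hb N (length l) ltac:(lia)) as [E|E].
  - apply N1. exists N. split; [lia|]. apply Fa; auto.
  - apply N2. exists N. split; [lia|]. apply Fa; auto.
Qed.

Lemma pre_Gd F u : (forall N i, (i < N)%nat -> F N i = u i \/ F N i = u i + 1) -> forall k, Gd F (pre F u k).
Proof.
  intros Hb k. induction k.
  - intro M. exists M. split; auto. simpl. intros; lia.
  - simpl. destruct excluded_middle_informative as [G|G]; auto.
    destruct (Gd_step F u _ Hb IHk); tauto.
Qed.

Lemma pre_prefix F u k i : (i < k)%nat -> nth i (pre F u k) 0 = nth i (pre F u (S i)) 0.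
Proof.
  induction k; intro H; [lia|].
  destruct (Nat.eq_dec i k); [subst; auto|].
  rewrite <- IHk by lia. simpl. destruct excluded_middle_informative; rewrite nth_app_last, pre_len;
  destruct (Nat.ltb_spec i k); auto; lia.
Qed.

Lemma konig (u : nat -> Z) (F : nat -> nat -> Z) :
  (forall N i, (i < N)%nat -> F N i = u i \/ F N i = u i + 1) ->
  exists f, forall K M, exists N, (M <= N)%nat /\ forall i, (i < K)%nat -> F N i = f i.
Proof.
  intro Hb. exists (fun i => nth i (pre F u (S i)) 0). intros K M.
  destruct (pre_Gd F u Hb K M) as [N [HN HA]]. exists N. split; auto.
  intros i Hi. rewrite <- pre_prefix with (k := K) by auto. apply HA. rewrite pre_len. auto.
Qed.

Lemma lt_iter a b K n : addr_lt a b -> agree K a b -> (n < K)%nat -> addr_lt (Nat.iter n shift a) (Nat.iter n shift b).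
Proof.
  intros L A. induction n; intro H; simpl; auto.
  apply lt_shift. apply IHn. lia. rewrite !entry_iter. apply A. lia.
Qed.

Lemma interval_unique s c k v : s <> AInfty -> addr_lt (acons k s) c -> addr_lt c (acons (k+1) s) ->
  addr_lt (acons v s) c -> addr_lt c (acons (v+1) s) -> v = k.
Proof.
  intros Hs L U L' U'. destruct (Z.lt_total v k) as [H|[H|H]]; auto; exfalso.
  - destruct (acons_le (v+1) k s Hs ltac:(lia)) as [E|E].
    + rewrite E in U'. exact (lt_asym _ _ U' L).
    + exact (lt_asym _ _ L (lt_trans _ _ _ U' E)).
  - destruct (acons_le (k+1) v s Hs ltac:(lia)) as [E|E].
    + rewrite E in U. exact (lt_asym _ _ U L').
    + exact (lt_asym _ _ L' (lt_trans _ _ _ U E)).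
Qed.

Lemma bnd_above s k c v : s <> AInfty -> addr_lt (acons k s) c -> entry c 0 = Some (2*k) ->
  addr_lt (acons v s) c -> addr_lt c (acons (v+1) s) -> v = k.
Proof.
  intros Hs L Ec L' U'.
  pose proof (lt_first_le _ _ _ _ L' (acons_0 _ _ Hs) Ec).
  pose proof (lt_first_le _ _ _ _ U' Ec (acons_0 _ _ Hs)).
  assert (v = k \/ v = k - 1) as [|Hv] by lia; auto.
  exfalso. subst v. replace (k-1+1) with k in U' by lia. exact (lt_asym _ _ L U').
Qed.

Lemma bnd_below s k c v : s <> AInfty -> addr_lt c (acons k s) -> entry c 0 = Some (2*k) ->
  addr_lt (acons v s) c -> addr_lt c (acons (v+1) s) -> v = k - 1.
Proof.
  intros Hs L Ec L' U'.
  pose proof (lt_first_le _ _ _ _ L' (acons_0 _ _ Hs) Ec).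
  pose proof (lt_first_le _ _ _ _ U' Ec (acons_0 _ _ Hs)).
  assert (v = k \/ v = k - 1) as [Hv|Hv] by lia; auto.
  exfalso. subst v. exact (lt_asym _ _ L L').
Qed.

Lemma inf_exists s (Hs : s <> AInfty) (u : nat -> Z)
  (Hno : forall m, (1 <= m)%nat -> forall W, Itin s s (SInf W) ->
     (fun n => u (n + m)%nat) <> (fun n => splus (W n)) /\ (fun n => u (n + m)%nat) <> (fun n => sminus (W n))) :
  exists f, forall n, sym_at s (Nat.iter n shift (AInf f)) (ISym (u n)).
Proof.
  assert (Ap : forall N, exists f, (forall i, (i < N)%nat -> sym_at s (Nat.iter i shift (AInf f)) (ISym (u i))) /\
                              (forall i, (1 <= i <= N)%nat -> Nat.iter i shift (AInf f) <> s)).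
  { intro N. destruct (zchoice s N) as [g Hg]. destruct (approx s Hs N u g Hg) as [f [_ [P2 P3]]]. eauto. }
  pose (F := fun N => proj1_sig (constructive_indefinite_description _ (Ap N))).
  assert (HF : forall N, (forall i, (i < N)%nat -> sym_at s (Nat.iter i shift (AInf (F N))) (ISym (u i))) /\
                              (forall i, (1 <= i <= N)%nat -> Nat.iter i shift (AInf (F N)) <> s)).
  { intro N. exact (proj2_sig (constructive_indefinite_description _ (Ap N))). }
  assert (Hb : forall N i, (i < N)%nat -> F N i = u i \/ F N i = u i + 1).
  { intros N i Hi. assert (Ee : entry (Nat.iter i shift (AInf (F N))) 0 = Some (2 * F N i)).
    { rewrite entry_iter, entry_AInf. reflexivity. }
    pose proof (sym_first s _ _ _ Hs (proj1 (HF N) i Hi) Ee). lia. }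
  destruct (konig u F Hb) as [f Hlim].
  assert (AgL : forall K N n, (forall i, (i < K)%nat -> F N i = f i) ->
             agree (K - n) (Nat.iter n shift (AInf (F N))) (Nat.iter n shift (AInf f))).
  { intros K N n H i Hi. rewrite !entry_iter, !entry_AInf. f_equal. f_equal. apply H. lia. }
  assert (Side : forall m, (1 <= m)%nat -> Nat.iter m shift (AInf f) <> s).
  { intros m Hm E.
    set (Zn := fun N => Nat.iter m shift (AInf (F N))).
    assert (ZnI : forall N, Zn N <> AInfty) by (intro N; unfold Zn; rewrite iter_AInf; discriminate).
    set (NearA := fun K => exists N, (m + K <= N)%nat /\ agree K (Zn N) s /\ addr_lt s (Zn N)).
    set (NearB := fun K => exists N, (m + K <= N)%nat /\ agree K (Zn N) s /\ addr_lt (Zn N) s).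
    assert (Nr : forall K, NearA K \/ NearB K).
    { intro K. destruct (Hlim (m+K)%nat (m+K)%nat) as [N [HN HA]].
      assert (Ag : agree K (Zn N) s).
      { rewrite <- E. unfold Zn. replace K with (m + K - m)%nat at 1 by lia. apply AgL. auto. }
      assert (Ne : Zn N <> s) by (apply (proj2 (HF N)); lia).
      destruct (trich (Zn N) s (ZnI N) Hs) as [Q|[Q|Q]]; [contradiction| right | left];
        exists N; auto. }
    assert (MA : forall K K', NearA K -> (K' <= K)%nat -> NearA K').
    { intros K K' [N [H1 [H2 H3]]] L. exists N. split; [lia|]. split; auto. eapply agree_le; eauto. }
    assert (MB : forall K K', NearB K -> (K' <= K)%nat -> NearB K').
    { intros K K' [N [H1 [H2 H3]]] L. exists N. split; [lia|]. split; auto. eapply agree_le; eauto. }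
    assert (Cs : (forall K, NearA K) \/ (forall K, NearB K)).
    { destruct (classic (forall K, NearA K)) as [H|NA]; [left; auto|right].
      apply not_all_ex_not in NA. destruct NA as [K0 NA]. intro K.
      destruct (Nr (Nat.max K K0)) as [A|B].
      - exfalso. apply NA. eapply MA; eauto. lia.
      - eapply MB; eauto. lia. }
    assert (Es : s = AInf (fun t => f (t + m)%nat)) by (rewrite <- E; apply iter_AInf).
    assert (Hex : forall i, exists e, sym_at s (Nat.iter i shift s) e).
    { intro i. replace (Nat.iter i shift s) with (Nat.iter i shift (AInf (fun t => f (t + m)%nat)))
        by (rewrite <- Es; reflexivity).
      rewrite iter_AInf. apply sym_exists; auto. }
    pose (W := fun i => proj1_sig (constructive_indefinite_description _ (Hex i))).
    assert (HW : forall i, sym_at s (Nat.iter i shift s) (W i)).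
    { intro i. exact (proj2_sig (constructive_indefinite_description _ (Hex i))). }
    destruct (Hno m Hm W HW) as [N1 N2].
    assert (Symc : forall N i, (i + m < N)%nat -> sym_at s (Nat.iter i shift (Zn N)) (ISym (u (i + m)%nat))).
    { intros N i Hi. unfold Zn. rewrite <- Nat.iter_add. apply (proj1 (HF N)). auto. }
    assert (CA : (forall K, NearA K) -> forall i, u (i + m)%nat = splus (W i)).
    { intros HA i. destruct (HW i) as [Ha Sw].
      set (a := Nat.iter i shift s) in *.
      destruct (W i) as [k|k].
      - destruct Sw as [L U]. rewrite !bnd_acons in L, U by auto.
        destruct (stable_lt_r a _ L) as [B1 HB1]. destruct (stable_lt_l a _ U) as [B2 HB2].
        destruct (HA (i + B1 + B2 + 1)%nat) as [N [HN [Ag Lt]]].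
        pose proof (agree_iter _ i _ _ Ag) as Ag'.
        destruct (Symc N i ltac:(lia)) as [_ [L' U']]. rewrite !bnd_acons in L', U' by auto.
        simpl splus. apply (interval_unique s (Nat.iter i shift (Zn N)) k (u (i+m)%nat) Hs); auto.
        + apply HB1. apply (agree_le _ B1 _ _ Ag'). lia.
        + apply HB2. apply (agree_le _ B2 _ _ Ag'). lia.
      - rewrite bnd_acons in Sw by auto.
        destruct (HA (S i)) as [N [HN [Ag Lt]]].
        pose proof (lt_iter _ _ (S i) i Lt (agree_sym _ _ _ Ag) ltac:(lia)) as Lc.
        change (Nat.iter i shift s) with a in Lc. rewrite Sw in Lc.
        assert (Ec : entry (Nat.iter i shift (Zn N)) 0 = Some (2*k)).
        { rewrite entry_iter, Ag by lia. rewrite <- entry_iter. change (Nat.iter i shift s) with a.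
          rewrite Sw, acons_0; auto. }
        destruct (Symc N i ltac:(lia)) as [_ [L' U']]. rewrite !bnd_acons in L', U' by auto.
        simpl splus. exact (bnd_above s k _ _ Hs Lc Ec L' U'). }
    assert (CB : (forall K, NearB K) -> forall i, u (i + m)%nat = sminus (W i)).
    { intros HA i. destruct (HW i) as [Ha Sw].
      set (a := Nat.iter i shift s) in *.
      destruct (W i) as [k|k].
      - destruct Sw as [L U]. rewrite !bnd_acons in L, U by auto.
        destruct (stable_lt_r a _ L) as [B1 HB1]. destruct (stable_lt_l a _ U) as [B2 HB2].
        destruct (HA (i + B1 + B2 + 1)%nat) as [N [HN [Ag Lt]]].
        pose proof (agree_iter _ i _ _ Ag) as Ag'.
        destruct (Symc N i ltac:(lia)) as [_ [L' U']]. rewrite !bnd_acons in L', U' by auto.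
        simpl sminus. apply (interval_unique s (Nat.iter i shift (Zn N)) k (u (i+m)%nat) Hs); auto.
        + apply HB1. apply (agree_le _ B1 _ _ Ag'). lia.
        + apply HB2. apply (agree_le _ B2 _ _ Ag'). lia.
      - rewrite bnd_acons in Sw by auto.
        destruct (HA (S i)) as [N [HN [Ag Lt]]].
        pose proof (lt_iter _ _ (S i) i Lt Ag ltac:(lia)) as Lc.
        change (Nat.iter i shift s) with a in Lc. rewrite Sw in Lc.
        assert (Ec : entry (Nat.iter i shift (Zn N)) 0 = Some (2*k)).
        { rewrite entry_iter, Ag by lia. rewrite <- entry_iter. change (Nat.iter i shift s) with a.
          rewrite Sw, acons_0; auto. }
        destruct (Symc N i ltac:(lia)) as [_ [L' U']]. rewrite !bnd_acons in L', U' by auto.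
        simpl sminus. exact (bnd_below s k _ _ Hs Lc Ec L' U'). }
    destruct Cs as [A|B].
    - apply N1. apply functional_extensionality. intro n. apply CA; auto.
    - apply N2. apply functional_extensionality. intro n. apply CB; auto.
  }
  exists f. intro n. set (Xn := Nat.iter n shift (AInf f)).
  assert (XnI : Xn <> AInfty) by (unfold Xn; rewrite iter_AInf; discriminate).
  assert (Low : addr_lt (acons (u n) s) Xn).
  { destruct (trich Xn (acons (u n) s) XnI (acons_ne _ _ Hs)) as [Q|[Q|Q]]; auto; exfalso.
    - apply (Side (S n) ltac:(lia)). change (Nat.iter (S n) shift (AInf f)) with (shift Xn).
      rewrite Q, shift_acons. reflexivity.
    - destruct (stable_lt_l _ _ Q) as [B HB]. destruct (Hlim (n + B + 1)%nat (S n)) as [N [HN HA]].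
      pose proof (AgL _ N n HA) as Ag.
      assert (Lc := HB _ (agree_le _ B _ _ Ag ltac:(lia))).
      destruct (proj1 (HF N) n ltac:(lia)) as [_ [L' _]]. rewrite bnd_acons in L' by auto.
      exact (lt_asym _ _ L' Lc). }
  assert (Up : addr_lt Xn (acons (u n + 1) s)).
  { destruct (trich Xn (acons (u n + 1) s) XnI (acons_ne _ _ Hs)) as [Q|[Q|Q]]; auto; exfalso.
    - apply (Side (S n) ltac:(lia)). change (Nat.iter (S n) shift (AInf f)) with (shift Xn).
      rewrite Q, shift_acons. reflexivity.
    - destruct (stable_lt_r _ _ Q) as [B HB]. destruct (Hlim (n + B + 1)%nat (S n)) as [N [HN HA]].
      pose proof (AgL _ N n HA) as Ag.
      assert (Lc := HB _ (agree_le _ B _ _ Ag ltac:(lia))).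
      destruct (proj1 (HF N) n ltac:(lia)) as [_ [_ U']]. rewrite bnd_acons in U' by auto.
      exact (lt_asym _ _ U' Lc). }
  split; auto. rewrite !bnd_acons by auto. auto.
Qed.

Lemma nodup_range {T} (w : nat -> T) : forall n a,
  (forall i j, (a <= i)%nat -> (i < j)%nat -> (j < a + n)%nat -> w i <> w j) -> NoDup (map w (seq a n)).
Proof.
  induction n; intros a H; simpl; constructor.
  - intro Hin. apply in_map_iff in Hin. destruct Hin as [x [Ex Hx]]. apply in_seq in Hx.
    apply (H a x); auto; lia.
  - apply IHn. intros i j Hi Hij Hj. apply H; lia.
Qed.

Lemma php {T} (L : list T) (w : nat -> T) : (forall k, In (w k) L) -> forall N,
  exists i j, (N <= i)%nat /\ (i < j)%nat /\ (j <= N + length L)%nat /\ w i = w j.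
Proof.
  intros HL N. apply NNPP. intro Hn.
  assert (ND : NoDup (map w (seq N (S (length L))))).
  { apply nodup_range. intros i j Hi Hij Hj E. apply Hn. exists i, j. repeat split; auto; lia. }
  assert (Inc : incl (map w (seq N (S (length L)))) L).
  { intros x Hx. apply in_map_iff in Hx. destruct Hx as [k [<- _]]. auto. }
  pose proof (NoDup_incl_length ND Inc). rewrite length_map, length_seq in H. lia.
Qed.

Lemma max_bound (P : nat -> nat -> Prop) : (forall d l l', P d l -> (l <= l')%nat -> P d l') ->
  forall n, (forall d, (d < n)%nat -> exists l, P d l) -> exists M, forall d, (d < n)%nat -> P d M.
Proof.
  intros Mon. induction n; intro H. { exists 0%nat. intros; lia. }
  destruct IHn as [M HM]. { intros d Hd. apply H. lia. }
  destruct (H n ltac:(lia)) as [l Hl]. exists (Nat.max M l). intros d Hd.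
  destruct (Nat.eq_dec d n). { subst. eapply Mon; eauto; lia. }
  eapply Mon; [apply HM; lia|lia].
Qed.

Lemma eventually_periodic {T} (L : list T) (w : nat -> T) : (forall k, In (w k) L) ->
  (forall k l, w (S k) = w (S l) -> w k = w l) -> exists d, (1 <= d)%nat /\ forall k, w k = w (k + d)%nat.
Proof.
  intros HL Hb. apply NNPP. intro Hn.
  assert (Down : forall d l l', (l <= l')%nat -> w l' = w (l' + d)%nat -> w l = w (l + d)%nat).
  { intros d l l' Hl. induction l' as [|l' IH]; intro E.
    - replace l with 0%nat by lia. auto.
    - destruct (Nat.eq_dec l (S l')) as [->|]; auto. apply IH; [lia|]. apply Hb. simpl in E. exact E. }
  set (n := length L).
  assert (Ex : forall d, (d < n)%nat -> exists l, forall x, (l <= x)%nat -> w x <> w (x + S d)%nat).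
  { intros d Hd. apply NNPP. intro N. apply Hn. exists (S d). split; [lia|]. intro k.
    apply NNPP. intro Nk. apply N. exists (S k). intros x Hx E. apply Nk. apply (Down _ k x); auto; lia. }
  destruct (max_bound (fun d l => forall x, (l <= x)%nat -> w x <> w (x + S d)%nat)) with (n := n) as [M HM].
  { intros d l l' H Hl x Hx. apply H. lia. }
  { exact Ex. }
  destruct (php L w HL M) as [i [j [Hi [Hij [Hj E]]]]].
  apply (HM (j - i - 1)%nat ltac:(unfold n; lia) i Hi). replace (i + S (j - i - 1))%nat with j by lia. exact E.
Qed.

Lemma map_seq_eq (h1 h2 : nat -> Z) : forall n a, map h1 (seq a n) = map h2 (seq a n) <->
  (forall t, (t < n)%nat -> h1 (a + t)%nat = h2 (a + t)%nat).
Proof.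
  induction n; intro a; simpl; split; auto.
  - intros; lia.
  - intro E. injection E as E1 E2. intros [|t] Ht. { rewrite Nat.add_0_r. auto. }
    pose proof (proj1 (IHn (S a)) E2) as E3. replace (a + S t)%nat with (S a + t)%nat by lia. apply E3. lia.
  - intro H. f_equal. { specialize (H 0%nat ltac:(lia)). rewrite Nat.add_0_r in H. auto. }
    apply (proj2 (IHn (S a))). intros t Ht. replace (S a + t)%nat with (a + S t)%nat by lia. apply H. lia.
Qed.

Fixpoint cands (vs : list Z) : list (list Z) :=
  match vs with
  | [] => [[]]
  | v :: vs' => map (cons v) (cands vs') ++ map (cons (v+1)) (cands vs')
  end.

Lemma in_cands (h v : nat -> Z) : forall n a, (forall t, (t < n)%nat -> h (a+t)%nat = v (a+t)%nat \/ h (a+t)%nat = v (a+t)%nat + 1) ->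
  In (map h (seq a n)) (cands (map v (seq a n))).
Proof.
  induction n; intros a H; simpl; auto.
  apply in_or_app. specialize (IHn (S a)).
  assert (IH : In (map h (seq (S a) n)) (cands (map v (seq (S a) n)))).
  { apply IHn. intros t Ht. replace (S a + t)%nat with (a + S t)%nat by lia. apply H. lia. }
  destruct (H 0%nat ltac:(lia)) as [E|E]; rewrite Nat.add_0_r in E; rewrite E.
  - left. apply in_map. auto.
  - right. apply in_map. auto.
Qed.

Definition Sol s (u : nat -> Z) f := forall n, sym_at s (Nat.iter n shift (AInf f)) (ISym (u n)).
Definition Cw s (u : nat -> Z) m D := ~ (forall i, (i < D)%nat -> sym_at s (Nat.iter i shift s) (ISym (u (m + 1 + i)%nat))).

Lemma sol_bits s u f n : s <> AInfty -> Sol s u f -> f n = u n \/ f n = u n + 1.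
Proof.
  intros Hs H. assert (Ee : entry (Nat.iter n shift (AInf f)) 0 = Some (2 * f n)).
  { rewrite entry_iter, entry_AInf. reflexivity. }
  pose proof (sym_first s _ _ _ Hs (H n) Ee). lia.
Qed.

Lemma window_half s u f f' m D : s <> AInfty -> Sol s u f -> Sol s u f' -> Cw s u m D ->
  (forall j, (1 <= j <= D)%nat -> f (m + j)%nat = f' (m + j)%nat) -> f m = u m -> f' m = u m + 1 -> False.
Proof.
  intros Hs Sf Sf' HC Ag Em Em'. apply HC.
  set (X := Nat.iter m shift (AInf f)). set (X' := Nat.iter m shift (AInf f')).
  assert (EX : entry X 0 = Some (2 * u m)) by (unfold X; rewrite entry_iter, entry_AInf; simpl; rewrite Em; auto).
  assert (EX' : entry X' 0 = Some (2 * (u m + 1))) by (unfold X'; rewrite entry_iter, entry_AInf; simpl; rewrite Em'; auto).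
  destruct (Sf m) as [_ [L _]]. destruct (Sf' m) as [_ [_ U']]. fold X in L. fold X' in U'.
  rewrite bnd_acons in L, U' by auto.
  assert (LT' : addr_lt s (shift X)).
  { rewrite <- (shift_acons (u m) s). apply lt_shift; auto. rewrite acons_0; auto. }
  assert (LT : addr_lt (shift X') s).
  { rewrite <- (shift_acons (u m + 1) s). apply lt_shift; auto. rewrite acons_0; auto. }
  set (T := shift X'). set (T' := shift X).
  assert (AgT : agree D T T').
  { intros i Hi. unfold T, T', X, X'. rewrite !entry_shift, !entry_iter, !entry_AInf.
    replace (S i + m)%nat with (m + S i)%nat by lia. rewrite Ag by lia. auto. }
  assert (Inv : forall i, (i < D)%nat -> addr_lt (Nat.iter i shift T) (Nat.iter i shift s) /\
     addr_lt (Nat.iter i shift s) (Nat.iter i shift T') /\ agree (D - i) (Nat.iter i shift T) (Nat.iter i shift T')).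
  { induction i; intro Hi.
    - simpl. rewrite Nat.sub_0_r. auto.
    - destruct (IHi ltac:(lia)) as [A1 [A2 A3]].
      pose proof (convex _ _ _ _ A1 A2 A3) as A4.
      assert (E1 : entry (Nat.iter i shift T) 0 = entry (Nat.iter i shift s) 0) by (apply A4; lia).
      assert (E2 : entry (Nat.iter i shift s) 0 = entry (Nat.iter i shift T') 0) by (rewrite <- E1; apply A3; lia).
      simpl. split; [apply lt_shift; auto|]. split; [apply lt_shift; auto|].
      intros j Hj. rewrite !entry_shift. apply A3. lia. }
  intros i Hi. destruct (Inv i Hi) as [A1 [A2 _]].
  assert (ST : sym_at s (Nat.iter i shift T) (ISym (u (m + 1 + i)%nat))).
  { unfold T, X'. change (shift (Nat.iter m shift (AInf f'))) with (Nat.iter (S m) shift (AInf f')).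
    rewrite <- Nat.iter_add. replace (m + 1 + i)%nat with (i + S m)%nat by lia. apply Sf'. }
  assert (ST' : sym_at s (Nat.iter i shift T') (ISym (u (m + 1 + i)%nat))).
  { unfold T', X. change (shift (Nat.iter m shift (AInf f))) with (Nat.iter (S m) shift (AInf f)).
    rewrite <- Nat.iter_add. replace (m + 1 + i)%nat with (i + S m)%nat by lia. apply Sf. }
  destruct ST as [_ [L1 _]]. destruct ST' as [_ [_ U1]].
  split; [exact (proj2 (lt_not_none _ _ A1))|]. split; eapply lt_trans; eauto.
Qed.

Lemma window s u f f' m D : s <> AInfty -> Sol s u f -> Sol s u f' -> Cw s u m D ->
  (forall j, (1 <= j <= D)%nat -> f (m + j)%nat = f' (m + j)%nat) -> f m = f' m.
Proof.
  intros Hs Sf Sf' HC Ag.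
  destruct (sol_bits s u f m Hs Sf) as [E|E]; destruct (sol_bits s u f' m Hs Sf') as [E'|E']; try congruence.
  - exfalso. exact (window_half s u f f' m D Hs Sf Sf' HC Ag E E').
  - exfalso. refine (window_half s u f' f m D Hs Sf' Sf HC _ E' E). intros j Hj. symmetry. auto.
Qed.

Lemma propagate s u f f' D : s <> AInfty -> Sol s u f -> Sol s u f' -> (forall m, Cw s u m D) ->
  forall N, (forall j, (N < j <= N + D)%nat -> f j = f' j) -> forall j, (j <= N + D)%nat -> f j = f' j.
Proof.
  intros Hs Sf Sf' HC N HN.
  assert (forall d, (d <= N + 1)%nat -> forall j, (N + 1 - d <= j <= N + D)%nat -> f j = f' j).
  { induction d; intros Hd j Hj.
    - apply HN. lia.
    - destruct (Nat.eq_dec j (N - d)%nat).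
      + subst j. apply (window s u f f' _ D Hs Sf Sf' (HC _)). intros t Ht. apply IHd; lia.
      + apply IHd; lia. }
  intros j Hj. apply (H (N+1)%nat); lia.
Qed.

Lemma sol_shift s u f q : (forall i, u (i + q)%nat = u i) -> Sol s u f -> Sol s u (fun t => f (t + q)%nat).
Proof.
  intros Hu Sf n. rewrite iter_AInf.
  replace (AInf (fun i => f (i + n + q)%nat)) with (Nat.iter (n + q) shift (AInf f)).
  - rewrite <- Hu. apply Sf.
  - rewrite iter_AInf. f_equal. apply functional_extensionality. intro i. f_equal. lia.
Qed.

Lemma uper (u : nat -> Z) p : (forall i, u (i + p)%nat = u i) -> forall k i, u (i + k * p)%nat = u i.
Proof.
  intros H k. induction k; intro i. { rewrite Nat.add_0_r. auto. }
  replace (i + S k * p)%nat with (i + k * p + p)%nat by lia. rewrite H. auto.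
Qed.

Lemma periodic_sol s (Hs : s <> AInfty) (u : nat -> Z) p (Hp : (1 <= p)%nat)
  (Hper : forall i, u (i + p)%nat = u i)
  (Hno : forall m, (1 <= m)%nat -> ~ (forall i, sym_at s (Nat.iter i shift s) (ISym (u (i + m)%nat))))
  f (Sf : Sol s u f) : exists n, (1 <= n)%nat /\ Nat.iter n shift (AInf f) = AInf f.
Proof.
  pose proof (uper u p Hper) as Up.
  assert (Cex : forall m, exists D, Cw s u m D).
  { intro m. apply NNPP. intro N. apply (Hno (S m) ltac:(lia)). intro i.
    apply NNPP. intro Ni. apply N. exists (S i). intro Hall. apply Ni.
    replace (i + S m)%nat with (m + 1 + i)%nat by lia. apply Hall. lia. }
  assert (Cmono : forall m D D', Cw s u m D -> (D <= D')%nat -> Cw s u m D').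
  { intros m D D' H L Hall. apply H. intros i Hi. apply Hall. lia. }
  destruct (max_bound (fun m D => Cw s u m D)) with (n := p) as [D0 HD0].
  { intros; eapply Cmono; eauto. }
  { intros; apply Cex. }
  assert (HC : forall m, Cw s u m D0).
  { intro m. intro Hall. apply (HD0 (m mod p)%nat). { apply Nat.mod_upper_bound. lia. }
    intros i Hi. specialize (Hall i Hi).
    replace (u (m mod p + 1 + i)%nat) with (u (m + 1 + i)%nat); [exact Hall|].
    rewrite <- (Up (m / p)%nat (m mod p + 1 + i)%nat). f_equal.
    pose proof (Nat.div_mod_eq m p). lia. }
  set (D := D0).
  set (win := fun k => map (fun j => f (k * p + j)%nat) (seq 1 D)).
  assert (Hin : forall k, In (win k) (cands (map u (seq 1 D)))).
  { intro k. apply in_cands. intros t Ht.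
    rewrite <- (Up k (1 + t)%nat). replace (k * p + (1 + t))%nat with (1 + t + k * p)%nat by lia.
    apply (sol_bits s u f _ Hs Sf). }
  assert (Shk : forall k, Sol s u (fun t => f (t + k * p)%nat)).
  { intro k. apply sol_shift; auto. }
  assert (Back : forall k l, win (S k) = win (S l) -> win k = win l).
  { intros k l E. unfold win in E. pose proof (proj1 (map_seq_eq _ _ _ _) E) as E0. clear E. rename E0 into E.
    assert (W : forall j, (j <= p + D)%nat -> f (j + k * p)%nat = f (j + l * p)%nat).
    { apply (propagate s u _ _ D Hs (Shk k) (Shk l) HC p). intros j Hj.
      specialize (E (j - p - 1)%nat ltac:(lia)).
      replace (j + k * p)%nat with (S k * p + (1 + (j - p - 1)))%nat by lia.
      replace (j + l * p)%nat with (S l * p + (1 + (j - p - 1)))%nat by lia. exact E. }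
    unfold win. apply (proj2 (map_seq_eq _ _ _ _)). intros t Ht.
    replace (k * p + (1 + t))%nat with ((1 + t) + k * p)%nat by lia.
    replace (l * p + (1 + t))%nat with ((1 + t) + l * p)%nat by lia. apply W. lia. }
  destruct (eventually_periodic _ win Hin Back) as [d [Hd Hw]].
  assert (Sg : Sol s u (fun t => f (t + d * p)%nat)) by apply Shk.
  assert (Eq : forall m, f m = f (m + d * p)%nat).
  { intro m. specialize (Hw m). unfold win in Hw. pose proof (proj1 (map_seq_eq _ _ _ _) Hw) as E0. clear Hw. rename E0 into Hw.
    apply (propagate s u f (fun t => f (t + d * p)%nat) D Hs Sf Sg HC (m * p)%nat).
    - intros j Hj. specialize (Hw (j - m * p - 1)%nat ltac:(lia)).
      replace j with (m * p + (1 + (j - m * p - 1)))%nat at 1 by lia. rewrite Hw. f_equal. nia.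
    - nia. }
  exists (d * p)%nat. split; [nia|]. rewrite iter_AInf. f_equal. apply functional_extensionality.
  intro i. symmetry. apply Eq.
Qed.

Lemma inf_first x j : sym_at AInfty x (ISym j) -> entry x 0 = Some (2*j).
Proof.
  intros [Hx [Lz Uz]]. simpl bnd in Lz, Uz.
  destruct (first_entry_some x Hx) as [w Ez]. rewrite Ez. f_equal.
  pose proof (lt_first_le _ _ _ _ Lz (e0 _) Ez).
  pose proof (lt_first_le _ _ _ _ Uz Ez (e0 _)).
  assert (w <> 2*(j-1)+1).
  { intro Q. subst w. destruct Lz as [k [Ak [p [q [P1 [P2 P3]]]]]]. destruct k.
    - rewrite Ez in P2. rewrite e0 in P1. apply Sinj in P1; apply Sinj in P2. lia.
    - rewrite e1 in P1. discriminate. }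
  assert (w <> 2*(j+1-1)+1).
  { intro Q. subst w. destruct Uz as [k [Ak [p [q [P1 [P2 P3]]]]]]. destruct k.
    - rewrite Ez in P1. rewrite e0 in P2. apply Sinj in P1; apply Sinj in P2. lia.
    - rewrite e1 in P2. discriminate. }
  lia.
Qed.

Lemma map_splus_ISym L : map splus (map ISym L) = L.
Proof. induction L; simpl; f_equal; auto. Qed.

Lemma itin_inf_is_AInf s r (u : nat -> isym) : Itin s r (SInf u) -> exists f, r = AInf f.
Proof.
  intro I. destruct r as [f|l h|]; eauto; exfalso.
  - destruct (I (S (length l))) as [N _]. apply N. apply iter_AInt.
  - destruct (I 0%nat) as [N _]. apply N. reflexivity.
Qed.

Theorem lemma3p6 (s : addr) :
  (forall u : sseq Z,
     (forall k : nat, (1 <= k)%nat -> forall w : sseq isym, Itin s s w ->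
        sshiftn k u <> Some (smap splus w) /\ sshiftn k u <> Some (smap sminus w)) ->
     (exists r : addr, Itin s r (smap ISym u)) /\
     (speriodic u -> forall r : addr, Itin s r (smap ISym u) -> aperiodic r)) /\
  (forall (t : addr) (k : nat) (r r' : addr),
     in_preimage k t r -> in_preimage k t r' ->
     forall v : sseq isym, Itin s r v -> Itin s r' v -> r = r') /\
  (forall r r' : addr, is_intermediate r -> is_intermediate r' ->
     forall v : sseq isym, Itin s r v -> Itin s r' v -> r = r').
Proof.
  split; [|split; [apply part2|apply part3]].
  intros u H. destruct u as [u|l].
  -
    destruct (classic (s = AInfty)) as [Hs|Hs].
    + subst s. split.
      * exists (AInf u). intro k. rewrite iter_AInf. split; [discriminate|]. simpl bnd. split.
        -- eapply lt_first; [apply e0|apply entry_AInf|]. cbv beta. rewrite Nat.add_0_l. lia.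
        -- eapply lt_first; [apply entry_AInf|apply e0|]. cbv beta. rewrite Nat.add_0_l. lia.
      * intros [n [Hn Ep]] r I. simpl in Ep. injection Ep as Ep.
        assert (Er : r = AInf u).
        { assert (Ek : forall k, entry r k = Some (2 * u k)).
          { intro k. pose proof (inf_first _ _ (I k)) as Q. rewrite entry_iter in Q. exact Q. }
          apply entry_ext; [|discriminate|].
          - intro E. subst r. specialize (Ek 0%nat). discriminate.
          - intro i. rewrite Ek. reflexivity. }
        subst r. split; [discriminate|]. exists n. split; auto. rewrite iter_AInf. rewrite Ep. reflexivity.
    + split.
      * destruct (inf_exists s Hs u) as [f Hf].
        { intros m Hm W HW. destruct (H m Hm (SInf W) HW) as [N1 N2]. simpl in N1, N2.
          split; intro E; [apply N1|apply N2]; rewrite E; reflexivity. }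
        exists (AInf f). exact Hf.
      * intros [n [Hn Ep]] r I. simpl in Ep. injection Ep as Ep.
        destruct (itin_inf_is_AInf _ _ _ I) as [f ->].
        assert (Hper : forall i, u (i + n)%nat = u i) by (intro i; exact (equal_f Ep i)).
        destruct (periodic_sol s Hs u n Hn Hper) with (f := f) as [q [Hq Eq]].
        { intros m Hm Hall. destruct (H m Hm (SInf (fun i => ISym (u (i + m)%nat))) Hall) as [N1 _].
          apply N1. reflexivity. }
        { exact I. }
        split; [discriminate|]. exists q. auto.
  -
    split.
    + destruct (classic (s = AInfty)) as [Hs|Hs].
      * subst s. destruct l as [|a l].
        -- exists AInfty. split; [simpl; intros; lia|reflexivity].
        -- exfalso. destruct (H (length (a :: l)) ltac:(simpl; lia) (SFin [])) as [N1 _].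
           { split; [simpl; intros; lia|reflexivity]. }
           apply N1. unfold sshiftn. rewrite Nat.leb_refl, skipn_all. reflexivity.
      * apply fin_exists; auto. intros k Hk I.
        destruct (H k ltac:(lia) _ I) as [N1 _]. apply N1. unfold sshiftn.
        destruct (Nat.leb_spec k (length l)); [|lia]. simpl smap. rewrite map_splus_ISym. reflexivity.
    + intros [n [Hn Ep]]. exfalso. unfold sshiftn in Ep.
      destruct (Nat.leb_spec n (length l)); [|discriminate].
      injection Ep as Ep. assert (Q := f_equal (@length _) Ep). rewrite length_skipn in Q. lia.
Qed.
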